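(* Let $\mathfrak f_3$ be the Lie algebra with basis $e_1,e_2,e_3,\alpha,\beta,\gamma$, brackets $[e_1,e_2]=\alpha$, $[e_2,e_3]=\beta$, $[e_3,e_1]=\gamma$, and $\alpha,\beta,\gamma$ central; let $\mathfrak z=\mathrm{span}(\alpha,\beta,\gamma)$. Consider linear maps $\delta:\mathfrak f_3\to\Lambda^2\mathfrak f_3$ with $\delta(\mathfrak z)=0$ and $\delta(e_i)=e_i\wedge A_i+\omega_i$ ($i=1,2,3$) for some $A_i\in\mathfrak z$, $\omega_i\in\Lambda^2\mathfrak z$. Such a $\delta$ is a Lie bialgebra structure if and only if there exist $a,b,c\in k$ with $A_1=a\alpha+b\beta+c\gamma$, $A_2=a\alpha-b\beta-c\gamma$, $A_3=-a\alpha-b\beta+c\gamma$, and $\omega_i\wedge A_i=0$ in $\Lambda^3\mathfrak z$ for $i=1,2,3$.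
   Context: The field $k$ has characteristic zero. A Lie bialgebra structure is a linear $\delta:\mathfrak g\to\Lambda^2\mathfrak g$ satisfying co-Jacobi (in Sweedler notation $\delta(x)=x_1\wedge x_2$: $\delta(x_1)\wedge x_2-x_1\wedge\delta(x_2)=0$ in $\Lambda^3\mathfrak g$) and the 1-cocycle condition $\delta[x,y]=[\delta x,y]+[x,\delta y]$ for the adjoint action on $\Lambda^2\mathfrak g$. *)

(* Defs.v *)
From HB Require Import structures.
From mathcomp Require Import all_boot all_order all_algebra.
Set Implicit Arguments. Unset Strict Implicit. Unset Printing Implicit Defensive.
Import Order.TTheory GRing.Theory.
Local Open Scope ring_scope.

(* The Lie algebra f_3 is modelled on k^6 (row vectors 'rV[k]_6) with basis
   index 0,1,2 = e1,e2,e3 and 3,4,5 = alpha,beta,gamma. *)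

Definition ix (n : nat) : 'I_6 := @inord 5 n.

Definition eb (k : fieldType) (i : 'I_6) : 'rV[k]_6 := delta_mx 0 i.

Definition e_of3 (i : 'I_3) : 'I_6 := @widen_ord 3 6 isT i.

Definition br (k : fieldType) (x y : 'rV[k]_6) : 'rV[k]_6 :=
  (x 0 (ix 0) * y 0 (ix 1) - x 0 (ix 1) * y 0 (ix 0)) *: eb k (ix 3)
+ (x 0 (ix 1) * y 0 (ix 2) - x 0 (ix 2) * y 0 (ix 1)) *: eb k (ix 4)
+ (x 0 (ix 2) * y 0 (ix 0) - x 0 (ix 0) * y 0 (ix 2)) *: eb k (ix 5).

(* Lambda^2 of k^6 is modelled by skew-symmetric 6x6 matrices; the wedge
   x /\ y has entries (x_i y_j - x_j y_i), so e_p /\ e_q = E_pq - E_qp. *)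
Definition wedge2 (k : fieldType) (x y : 'rV[k]_6) : 'M[k]_6 :=
  \matrix_(i, j) (x 0 i * y 0 j - x 0 j * y 0 i).

Definition skew (k : fieldType) (M : 'M[k]_6) : Prop := M^T = - M.

(* Lambda^3 of k^6 is modelled by alternating trilinear coefficient functions,
   u/\v/\w having coefficients det[[u_i,u_j,u_l],[v_i,v_j,v_l],[w_i,w_j,w_l]]. *)
Definition L3 (k : fieldType) := 'I_6 -> 'I_6 -> 'I_6 -> k.
Definition zero3 (k : fieldType) (T : L3 k) : Prop := forall i j l, T i j l = 0.

Definition wedge21 (k : fieldType) (M : 'M[k]_6) (w : 'rV[k]_6) : L3 k :=
  fun i j l => M i j * w 0 l + M j l * w 0 i + M l i * w 0 j.
Definition wedge12 (k : fieldType) (w : 'rV[k]_6) (M : 'M[k]_6) : L3 k :=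
  fun i j l => w 0 i * M j l - w 0 j * M i l + w 0 l * M i j.

Definition delta_of (k : fieldType) (d : 'I_6 -> 'M[k]_6) (x : 'rV[k]_6) : 'M[k]_6 :=
  \sum_(p < 6) x 0 p *: d p.

(* co-Jacobi expression delta(x_1) /\ x_2 - x_1 /\ delta(x_2), where
   delta(x) = sum_{p<q} c_pq e_p /\ e_q and x_1 (x) x_2 = sum_{p<q} c_pq e_p (x) e_q *)
Definition coJac (k : fieldType) (d : 'I_6 -> 'M[k]_6) (x : 'rV[k]_6) : L3 k :=
  fun i j l => \sum_(p < 6) \sum_(q < 6 | (p < q)%N)
     (delta_of d x) p q * (wedge21 (d p) (eb k q) i j l - wedge12 (eb k p) (d q) i j l).

(* matrix of ad_x : v |-> [x,v] acting on row vectors: [x,v] = v *m adm x *)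
Definition adm (k : fieldType) (x : 'rV[k]_6) : 'M[k]_6 :=
  \matrix_(i, j) (br x (eb k i)) 0 j.

(* adjoint action on Lambda^2: [x, y/\z] = [x,y]/\z + y/\[x,z] *)
Definition ad2 (k : fieldType) (x : 'rV[k]_6) (M : 'M[k]_6) : 'M[k]_6 :=
  (adm x)^T *m M + M *m adm x.

(* Lie bialgebra structure on f_3: delta lands in Lambda^2, co-Jacobi, and the
   1-cocycle condition delta[x,y] = [delta x, y] + [x, delta y]
   = ad_x(delta y) - ad_y(delta x). *)
Definition is_Lie_bialgebra (k : fieldType) (d : 'I_6 -> 'M[k]_6) : Prop :=
  (forall p, skew (d p)) /\
  (forall x, zero3 (coJac d x)) /\
  (forall x y, delta_of d (br x y) = ad2 x (delta_of d y) - ad2 y (delta_of d x)).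

Definition inZ (k : fieldType) (v : 'rV[k]_6) : Prop :=
  forall j : 'I_6, (j < 3)%N -> v 0 j = 0.
Definition inL2Z (k : fieldType) (M : 'M[k]_6) : Prop :=
  skew M /\ forall i j : 'I_6, ((i < 3)%N || (j < 3)%N) -> M i j = 0.

Definition i3 (n : nat) : 'I_3 := @inord 2 n.

(* Main.v *)
Require Import Defs.
From HB Require Import structures.
From mathcomp Require Import all_boot all_order all_algebra ring.
Import GRing.Theory.
Local Open Scope ring_scope.
Lemma sum6 (V : zmodType) (F : 'I_6 -> V) : \sum_(i < 6) F i = F (ix 0) + F (ix 1) + F (ix 2) + F (ix 3) + F (ix 4) + F (ix 5).
Proof.
rewrite !big_ord_recr big_ord0 /= add0r.
by congr (_ + _ + _ + _ + _ + _); congr F; apply/val_inj; rewrite /= /ix inordK.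
Qed.
Lemma sum6P (V : zmodType) (P : pred 'I_6) (F : 'I_6 -> V) : \sum_(i < 6 | P i) F i =
  (if P (ix 0) then F (ix 0) else 0) + (if P (ix 1) then F (ix 1) else 0) +
  (if P (ix 2) then F (ix 2) else 0) + (if P (ix 3) then F (ix 3) else 0) +
  (if P (ix 4) then F (ix 4) else 0) + (if P (ix 5) then F (ix 5) else 0).
Proof. by rewrite big_mkcond sum6. Qed.
Lemma ixv n : (n < 6)%N -> nat_of_ord (ix n) = n.
Proof. by move=> h; rewrite /ix inordK. Qed.
Lemma ixeq m n : (m < 6)%N -> (n < 6)%N -> (ix m == ix n) = (m == n).
Proof. by move=> hm hn; rewrite -val_eqE /= !ixv. Qed.
Definition ind {k : fieldType} (i j : 'I_6) : k := (i == j)%:R.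
Lemma indix {k : fieldType} m n : (m < 6)%N -> (n < 6)%N -> ind (ix m) (ix n) = (m == n)%:R :> k.
Proof. by move=> hm hn; rewrite /ind ixeq. Qed.

Lemma ebE (k : fieldType) i j : eb k i 0 j = (i == j)%:R.
Proof. by rewrite /eb mxE eqxx eq_sym. Qed.
Lemma ebE' (k : fieldType) i j : eb k i 0 j = ind i j.
Proof. by rewrite /eb mxE eqxx eq_sym. Qed.
Definition v3 {k : fieldType} (a b c : k) : 'rV[k]_6 :=
  a *: eb k (ix 3) + b *: eb k (ix 4) + c *: eb k (ix 5).
Lemma L2Zz {k : fieldType} {M : 'M[k]_6} : inL2Z M ->
  (forall j, M (ix 0) j = 0) * (forall j, M (ix 1) j = 0) * (forall j, M (ix 2) j = 0) *
  (forall j, M j (ix 0) = 0) * (forall j, M j (ix 1) = 0) * (forall j, M j (ix 2) = 0).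
Proof. by case=> _ h; repeat split; move=> j; apply: h; rewrite ixv ?orbT. Qed.


Definition v3e {k : fieldType} (a b c : k) (q : 'I_6) : k :=
  a * ind (ix 3) q + b * ind (ix 4) q + c * ind (ix 5) q.
Lemma v3E {k : fieldType} (a b c : k) q : v3 a b c 0 q = v3e a b c q.
Proof. by rewrite /v3 /v3e /ind !mxE !eqxx /= !(eq_sym q). Qed.
Lemma zeroE {k : fieldType} (p q : 'I_6) : (0 : 'M[k]_6) p q = 0.
Proof. by rewrite mxE. Qed.
Lemma dEn {k : fieldType} {d : 'I_6 -> 'M[k]_6} {n} {W : 'M[k]_6} {a b c : k} :
  d (ix n) = wedge2 (eb k (ix n)) (v3 a b c) + W ->
  forall p q, d (ix n) p q = ind (ix n) p * v3e a b c q - ind (ix n) q * v3e a b c p + W p q.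
Proof. move=> -> p q; rewrite !mxE !eqxx /= !(eq_sym p) !(eq_sym q) /v3e /ind; ring. Qed.
Lemma deltaE {k : fieldType} (d : 'I_6 -> 'M[k]_6) x p q :
  delta_of d x p q = \sum_(n < 6) x 0 n * d n p q.
Proof. by rewrite /delta_of summxE; apply: eq_bigr => n _; rewrite mxE. Qed.

Lemma coJacE {k : fieldType} {d : 'I_6 -> 'M[k]_6} {W0 W1 W2 : 'M[k]_6}
  {a0 b0 c0 a1 b1 c1 a2 b2 c2 : k} :
  inL2Z W0 -> inL2Z W1 -> inL2Z W2 ->
  (forall p : 'I_6, (3 <= p)%N -> d p = 0) ->
  d (ix 0) = wedge2 (eb k (ix 0)) (v3 a0 b0 c0) + W0 ->
  d (ix 1) = wedge2 (eb k (ix 1)) (v3 a1 b1 c1) + W1 ->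
  d (ix 2) = wedge2 (eb k (ix 2)) (v3 a2 b2 c2) + W2 ->
  forall x i j l, coJac d x i j l =
     x 0 (ix 0) * wedge21 W0 (v3 a0 b0 c0) i j l
   + x 0 (ix 1) * wedge21 W1 (v3 a1 b1 c1) i j l
   + x 0 (ix 2) * wedge21 W2 (v3 a2 b2 c2) i j l.
Proof.
move=> hW0 hW1 hW2 hz hd0 hd1 hd2 x i j l.
have d3 : d (ix 3) = 0 by apply: hz; rewrite ixv.
have d4 : d (ix 4) = 0 by apply: hz; rewrite ixv.
have d5 : d (ix 5) = 0 by apply: hz; rewrite ixv.
have e0 := dEn hd0; have e1 := dEn hd1; have e2 := dEn hd2.
case: (L2Zz hW0) => [[[[[z1 z2] z3] z4] z5] z6].
case: (L2Zz hW1) => [[[[[y1 y2] y3] y4] y5] y6].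
case: (L2Zz hW2) => [[[[[u1 u2] u3] u4] u5] u6].
rewrite /coJac !sum6P !ixv //=.
rewrite !deltaE !sum6 /wedge21 /wedge12 !v3E d3 d4 d5 !zeroE.
rewrite !e0 !e1 !e2 !ebE'.
rewrite /v3e.
rewrite !indix //=.
rewrite ?z1 ?z2 ?z3 ?z4 ?z5 ?z6 ?y1 ?y2 ?y3 ?y4 ?y5 ?y6 ?u1 ?u2 ?u3 ?u4 ?u5 ?u6.
ring.
Qed.

Lemma subE {k : fieldType} (A B : 'M[k]_6) i j : (A - B) i j = A i j - B i j.
Proof. by rewrite !mxE. Qed.
Lemma ad2E {k : fieldType} (x : 'rV[k]_6) M i j :
  ad2 x M i j = \sum_(n < 6) adm x n i * M n j + \sum_(n < 6) M i n * adm x n j.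
Proof. by rewrite /ad2 !mxE; congr (_ + _); apply: eq_bigr => n _; rewrite !mxE. Qed.
Lemma admE {k : fieldType} (x : 'rV[k]_6) p q : adm x p q = br x (eb k p) 0 q.
Proof. by rewrite /adm mxE. Qed.
Lemma brE {k : fieldType} (x y : 'rV[k]_6) q : br x y 0 q =
  (x 0 (ix 0) * y 0 (ix 1) - x 0 (ix 1) * y 0 (ix 0)) * ind (ix 3) q
+ (x 0 (ix 1) * y 0 (ix 2) - x 0 (ix 2) * y 0 (ix 1)) * ind (ix 4) q
+ (x 0 (ix 2) * y 0 (ix 0) - x 0 (ix 0) * y 0 (ix 2)) * ind (ix 5) q.
Proof. by rewrite /br /ind !mxE !eqxx /= !(eq_sym q). Qed.


Lemma ge3 : (3 <= ix 3)%N. Proof. by rewrite ixv. Qed.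
Lemma ge4 : (3 <= ix 4)%N. Proof. by rewrite ixv. Qed.
Lemma ge5 : (3 <= ix 5)%N. Proof. by rewrite ixv. Qed.
Ltac prep hW0 hW1 hW2 hz hd0 hd1 hd2 :=
  let d3 := fresh in let d4 := fresh in let d5 := fresh in
  have d3 := hz (ix 3) ge3; have d4 := hz (ix 4) ge4; have d5 := hz (ix 5) ge5;
  let e0 := fresh in let e1 := fresh in let e2 := fresh in
  have e0 := dEn hd0; have e1 := dEn hd1; have e2 := dEn hd2;
  let z1 := fresh in let z2 := fresh in let z3 := fresh in
  let z4 := fresh in let z5 := fresh in let z6 := fresh in
  let y1 := fresh in let y2 := fresh in let y3 := fresh in
  let y4 := fresh in let y5 := fresh in let y6 := fresh in
  let u1 := fresh in let u2 := fresh in let u3 := fresh in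
  let u4 := fresh in let u5 := fresh in let u6 := fresh in
  case: (L2Zz hW0) => [[[[[z1 z2] z3] z4] z5] z6];
  case: (L2Zz hW1) => [[[[[y1 y2] y3] y4] y5] y6];
  case: (L2Zz hW2) => [[[[[u1 u2] u3] u4] u5] u6];
  rewrite !subE !ad2E !sum6 !deltaE !sum6;
  rewrite d3 d4 d5 !zeroE !admE !brE;
  rewrite !e0 !e1 !e2 ?ebE';
  rewrite /v3e !indix //;
  rewrite /=;
  rewrite ?z1 ?z2 ?z3 ?z4 ?z5 ?z6 ?y1 ?y2 ?y3 ?y4 ?y5 ?y6 ?u1 ?u2 ?u3 ?u4 ?u5 ?u6.


Definition cocF {k : fieldType} (x y : 'rV[k]_6) (a0 b0 c0 a1 b1 c1 a2 b2 c2 : k) (i j : 'I_6) : k :=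
   (x 0 (ix 0) * y 0 (ix 1) - x 0 (ix 1) * y 0 (ix 0)) *
     (ind (ix 3) i * v3e (a0 + a1) (b0 + b1) (c0 + c1) j - ind (ix 3) j * v3e (a0 + a1) (b0 + b1) (c0 + c1) i)
 + (x 0 (ix 1) * y 0 (ix 2) - x 0 (ix 2) * y 0 (ix 1)) *
     (ind (ix 4) i * v3e (a1 + a2) (b1 + b2) (c1 + c2) j - ind (ix 4) j * v3e (a1 + a2) (b1 + b2) (c1 + c2) i)
 + (x 0 (ix 2) * y 0 (ix 0) - x 0 (ix 0) * y 0 (ix 2)) *
     (ind (ix 5) i * v3e (a2 + a0) (b2 + b0) (c2 + c0) j - ind (ix 5) j * v3e (a2 + a0) (b2 + b0) (c2 + c0) i).

Lemma cocycF {k : fieldType} {d : 'I_6 -> 'M[k]_6} {W0 W1 W2 : 'M[k]_6}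
  {a0 b0 c0 a1 b1 c1 a2 b2 c2 : k} :
  inL2Z W0 -> inL2Z W1 -> inL2Z W2 ->
  (forall p : 'I_6, (3 <= p)%N -> d p = 0) ->
  d (ix 0) = wedge2 (eb k (ix 0)) (v3 a0 b0 c0) + W0 ->
  d (ix 1) = wedge2 (eb k (ix 1)) (v3 a1 b1 c1) + W1 ->
  d (ix 2) = wedge2 (eb k (ix 2)) (v3 a2 b2 c2) + W2 ->
  forall x y i j, (delta_of d (br x y) - (ad2 x (delta_of d y) - ad2 y (delta_of d x))) i j
    = - cocF x y a0 b0 c0 a1 b1 c1 a2 b2 c2 i j.
Proof.
move=> hW0 hW1 hW2 hz hd0 hd1 hd2 x y i j.
prep hW0 hW1 hW2 hz hd0 hd1 hd2.
rewrite /cocF /v3e.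
ring.
Qed.

Lemma cocycS {k : fieldType} {d : 'I_6 -> 'M[k]_6} {W0 W1 W2 : 'M[k]_6} {a b c : k} :
  inL2Z W0 -> inL2Z W1 -> inL2Z W2 ->
  (forall p : 'I_6, (3 <= p)%N -> d p = 0) ->
  d (ix 0) = wedge2 (eb k (ix 0)) (v3 a b c) + W0 ->
  d (ix 1) = wedge2 (eb k (ix 1)) (v3 a (- b) (- c)) + W1 ->
  d (ix 2) = wedge2 (eb k (ix 2)) (v3 (- a) (- b) c) + W2 ->
  forall x y, delta_of d (br x y) = ad2 x (delta_of d y) - ad2 y (delta_of d x).
Proof.
move=> hW0 hW1 hW2 hz hd0 hd1 hd2 x y; apply/matrixP => i j.
apply/eqP; rewrite -subr_eq0 -subE (cocycF hW0 hW1 hW2 hz hd0 hd1 hd2) /cocF /v3e.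
apply/eqP; ring.
Qed.

Lemma fromeq {k : fieldType} {x y z : k} : x = y -> (z = x - y \/ z = y - x) -> z = 0.
Proof. by move=> -> [] ->; rewrite subrr. Qed.

Lemma cocycN {k : fieldType} {d : 'I_6 -> 'M[k]_6} {W0 W1 W2 : 'M[k]_6}
  {a0 b0 c0 a1 b1 c1 a2 b2 c2 : k} :
  inL2Z W0 -> inL2Z W1 -> inL2Z W2 ->
  (forall p : 'I_6, (3 <= p)%N -> d p = 0) ->
  d (ix 0) = wedge2 (eb k (ix 0)) (v3 a0 b0 c0) + W0 ->
  d (ix 1) = wedge2 (eb k (ix 1)) (v3 a1 b1 c1) + W1 ->
  d (ix 2) = wedge2 (eb k (ix 2)) (v3 a2 b2 c2) + W2 ->
  (forall x y, delta_of d (br x y) = ad2 x (delta_of d y) - ad2 y (delta_of d x)) ->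
  b0 + b1 = 0 /\ c0 + c1 = 0 /\ a1 + a2 = 0 /\ c1 + c2 = 0 /\ a2 + a0 = 0 /\ b2 + b0 = 0.
Proof.
move=> hW0 hW1 hW2 hz hd0 hd1 hd2 H.
have G : forall p q i j : nat, (p < 6)%N -> (q < 6)%N -> (i < 6)%N -> (j < 6)%N ->
  - cocF (eb k (ix p)) (eb k (ix q)) a0 b0 c0 a1 b1 c1 a2 b2 c2 (ix i) (ix j) = 0.
  move=> p q i j hp hq hi hj.
  by rewrite -(cocycF hW0 hW1 hW2 hz hd0 hd1 hd2) H subrr mxE.
split; [move: (G 0 1 3 4)|split; [move: (G 0 1 3 5)|split; [move: (G 1 2 4 3)|split;
  [move: (G 1 2 4 5)|split; [move: (G 2 0 5 3)|move: (G 2 0 5 4)]]]]];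
  move=> /(_ isT isT isT isT);
  rewrite /cocF /v3e !ebE' !indix //=;
  move=> h; apply: (fromeq h); first [left; ring | right; ring].
Qed.

Lemma comb2 {k : fieldType} {p q z : k} : p = 0 -> q = 0 -> z = p - q -> z = 0.
Proof. by move=> -> -> ->; rewrite subrr. Qed.
Lemma e3ix n : (n < 3)%N -> e_of3 (i3 n) = ix n.
Proof. by case: n => [|[|[|]]] // _; apply/val_inj; rewrite /= /i3 /ix !inordK. Qed.
Lemma ord6P (j : 'I_6) : exists2 n, (n < 6)%N & j = ix n.
Proof. by exists (val j); [exact: ltn_ord | rewrite /ix inord_val]. Qed.
Lemma ord3 (i : 'I_3) : i = i3 0 \/ i = i3 1 \/ i = i3 2.
Proof.
case: i => [[|[|[|n]]] hi]; [left|right;left|right;right|by []];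
  by apply/val_inj; rewrite /= /i3 inordK.
Qed.
Lemma Adec {k : fieldType} {v : 'rV[k]_6} : inZ v -> v = v3 (v 0 (ix 3)) (v 0 (ix 4)) (v 0 (ix 5)).
Proof.
move=> hv; apply/rowP => j; case: (ord6P j) => n hn ->; rewrite v3E /v3e.
case: n hn => [|[|[|[|[|[|n]]]]]] hn //; rewrite !indix //=;
  first [ring | rewrite hv ?ixv //; ring].
Qed.
Lemma skew_wedge2 {k : fieldType} (u v : 'rV[k]_6) : Defs.skew (wedge2 u v).
Proof. by rewrite /Defs.skew; apply/matrixP => i j; rewrite !mxE opprB. Qed.
Lemma skewD {k : fieldType} (M N : 'M[k]_6) : Defs.skew M -> Defs.skew N -> Defs.skew (M + N).
Proof.
move=> /matrixP hM /matrixP hN; apply/matrixP => i j.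
by move: (hM i j) (hN i j); rewrite !mxE => -> ->; rewrite opprD.
Qed.
Lemma skew0 {k : fieldType} : Defs.skew (0 : 'M[k]_6).
Proof. by rewrite /Defs.skew trmx0 oppr0. Qed.

Theorem mainTheorem18 (k : fieldType) (hchar : [pchar k] =i pred0)
  (A : 'I_3 -> 'rV[k]_6) (w : 'I_3 -> 'M[k]_6) (d : 'I_6 -> 'M[k]_6)
  (hA : forall i, inZ (A i)) (hw : forall i, inL2Z (w i))
  (hz : forall p : 'I_6, (3 <= p)%N -> d p = 0)
  (he : forall i : 'I_3, d (e_of3 i) = wedge2 (eb k (e_of3 i)) (A i) + w i) :
  is_Lie_bialgebra d <->
  (exists a b c : k,
     [/\ A (i3 0) = a *: eb k (ix 3) + b *: eb k (ix 4) + c *: eb k (ix 5),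
         A (i3 1) = a *: eb k (ix 3) - b *: eb k (ix 4) - c *: eb k (ix 5),
         A (i3 2) = - a *: eb k (ix 3) - b *: eb k (ix 4) + c *: eb k (ix 5)
       & forall i : 'I_3, zero3 (wedge21 (w i) (A i))]).
Proof.
have hd0 : d (ix 0) = wedge2 (eb k (ix 0)) (A (i3 0)) + w (i3 0).
  by have := he (i3 0); rewrite e3ix.
have hd1 : d (ix 1) = wedge2 (eb k (ix 1)) (A (i3 1)) + w (i3 1).
  by have := he (i3 1); rewrite e3ix.
have hd2 : d (ix 2) = wedge2 (eb k (ix 2)) (A (i3 2)) + w (i3 2).
  by have := he (i3 2); rewrite e3ix.
have hw0 := hw (i3 0); have hw1 := hw (i3 1); have hw2 := hw (i3 2).
split.
- case=> [_ [hco hcoc]].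
  have hA0 := Adec (hA (i3 0)); have hA1 := Adec (hA (i3 1)); have hA2 := Adec (hA (i3 2)).
  rewrite hA0 in hd0; rewrite hA1 in hd1; rewrite hA2 in hd2.
  have [e1 [e2 [e3 [e4 [e5 e6]]]]] := cocycN hw0 hw1 hw2 hz hd0 hd1 hd2 hcoc.
  exists (A (i3 0) 0 (ix 3)), (A (i3 0) 0 (ix 4)), (A (i3 0) 0 (ix 5)); split.
  + by rewrite {1}hA0.
  + rewrite {1}hA1 /v3.
    have -> : A (i3 1) 0 (ix 3) = A (i3 0) 0 (ix 3).
      by apply/eqP; rewrite -subr_eq0; apply/eqP; apply: (comb2 e3 e5); ring.
    have -> : A (i3 1) 0 (ix 4) = - A (i3 0) 0 (ix 4).
      by apply/eqP; rewrite -subr_eq0; apply/eqP; apply: (fromeq e1); first [left; ring | right; ring].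
    have -> : A (i3 1) 0 (ix 5) = - A (i3 0) 0 (ix 5).
      by apply/eqP; rewrite -subr_eq0; apply/eqP; apply: (fromeq e2); first [left; ring | right; ring].
    by rewrite !scaleNr.
  + rewrite {1}hA2 /v3.
    have -> : A (i3 2) 0 (ix 3) = - A (i3 0) 0 (ix 3).
      by apply/eqP; rewrite -subr_eq0; apply/eqP; apply: (fromeq e5); first [left; ring | right; ring].
    have -> : A (i3 2) 0 (ix 4) = - A (i3 0) 0 (ix 4).
      by apply/eqP; rewrite -subr_eq0; apply/eqP; apply: (fromeq e6); first [left; ring | right; ring].
    have -> : A (i3 2) 0 (ix 5) = A (i3 0) 0 (ix 5).
      by apply/eqP; rewrite -subr_eq0; apply/eqP; apply: (comb2 e4 e2); ring.
    by rewrite !scaleNr.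
  + move=> i; case: (ord3 i) => [->|[->|->]] p q r.
    * have := hco (eb k (ix 0)) p q r; rewrite (coJacE hw0 hw1 hw2 hz hd0 hd1 hd2).
      rewrite !ebE' !indix //= => h; rewrite {1}hA0; apply: (fromeq h); left; ring.
    * have := hco (eb k (ix 1)) p q r; rewrite (coJacE hw0 hw1 hw2 hz hd0 hd1 hd2).
      rewrite !ebE' !indix //= => h; rewrite {1}hA1; apply: (fromeq h); left; ring.
    * have := hco (eb k (ix 2)) p q r; rewrite (coJacE hw0 hw1 hw2 hz hd0 hd1 hd2).
      rewrite !ebE' !indix //= => h; rewrite {1}hA2; apply: (fromeq h); left; ring.
- case=> a [b [c [H0 H1 H2 Hw]]].
  have hd0' : d (ix 0) = wedge2 (eb k (ix 0)) (v3 a b c) + w (i3 0) by rewrite hd0 H0.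
  have hd1' : d (ix 1) = wedge2 (eb k (ix 1)) (v3 a (- b) (- c)) + w (i3 1).
    by rewrite hd1 H1 /v3 !scaleNr.
  have hd2' : d (ix 2) = wedge2 (eb k (ix 2)) (v3 (- a) (- b) c) + w (i3 2).
    by rewrite hd2 H2 /v3 ?scaleNr.
  have z0 : zero3 (wedge21 (w (i3 0)) (v3 a b c)).
    by have := Hw (i3 0); rewrite H0 => h; exact: h.
  have z1 : zero3 (wedge21 (w (i3 1)) (v3 a (- b) (- c))).
    by have := Hw (i3 1); rewrite H1 /v3 !scaleNr => h; exact: h.
  have z2 : zero3 (wedge21 (w (i3 2)) (v3 (- a) (- b) c)).
    by have := Hw (i3 2); rewrite H2 /v3 ?scaleNr => h; exact: h.
  split; [|split].
  + move=> p; case: (ord6P p) => n hn ->.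
    case: n hn => [|[|[|n]]] hn.
    * by rewrite hd0; apply: skewD; [exact: skew_wedge2 | exact: hw0.1].
    * by rewrite hd1; apply: skewD; [exact: skew_wedge2 | exact: hw1.1].
    * by rewrite hd2; apply: skewD; [exact: skew_wedge2 | exact: hw2.1].
    * by rewrite hz ?ixv //; exact: skew0.
  + move=> x p q r; rewrite (coJacE hw0 hw1 hw2 hz hd0' hd1' hd2') z0 z1 z2.
    by rewrite !mulr0 !addr0.
  + exact: (cocycS hw0 hw1 hw2 hz hd0' hd1' hd2').
Qed.
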